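(* Let $A,B$ be $d\times d$ matrices with entries in a commutative ring, such that $AB=0$. Define $c_i(A)$ by $\det(tI-A)=t^d+c_1(A)t^{d-1}+\dots+c_d(A)$, and similarly $c_j(B)$. Then $c_i(A)c_j(B)=0$ whenever $i+j>d$. *)

(* Defs.v *)
From mathcomp Require Import all_boot all_order all_algebra.
Set Implicit Arguments. Unset Strict Implicit. Unset Printing Implicit Defensive.
Import GRing.Theory.
Local Open Scope ring_scope.

Definition charcoef (R : comNzRingType) (d : nat) (A : 'M[R]_d) (i : nat) : R :=
  (char_poly A)`_(d - i).

(* Main.v *)
Require Import Defs.
From mathcomp Require Import all_boot all_order all_algebra.
From mathcomp Require Import zify.
Set Implicit Arguments. Unset Strict Implicit. Unset Printing Implicit Defensive.
Import GRing.Theory.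
Local Open Scope ring_scope.

Lemma coef_comp_scale (R : comNzRingType) (p : {poly R}) (a : R) k :
  (p \Po (a *: 'X))`_k = a ^+ k * p`_k.
Proof.
rewrite coef_comp_poly.
under eq_bigr do rewrite exprZn coefZ coefXn.
case: (ltnP k (size p)) => hk.
  rewrite (bigD1 (Ordinal hk)) //= eqxx mulr1 big1 ?addr0; first exact: mulrC.
  move=> i /= hi.
  have -> : (k == i) = false.
    by apply/negbTE; apply: contra hi => /eqP e; apply/eqP/val_inj.
  by rewrite mulr0 mulr0.
rewrite nth_default // mulr0 big1 // => i _.
have -> : (k == i) = false.
  by apply/negbTE; rewrite neq_ltn (leq_trans (ltn_ord i) hk) orbT.
by rewrite mulr0 mulr0.
Qed.

Lemma char_poly_scale (R : comNzRingType) d (a : R) (A : 'M[R]_d) :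
  char_poly (a *: A) \Po (a *: 'X) = a ^+ d *: char_poly A.
Proof.
rewrite /char_poly -det_map_mx.
have -> : map_mx (comp_poly (a *: 'X)) (char_poly_mx (a *: A)) = a%:P *: char_poly_mx A.
  apply/matrixP => i j; rewrite !mxE.
  case: (i == j); rewrite /= ?mulr1n ?mulr0n.
    by rewrite comp_polyD comp_polyX raddfN /= comp_polyC -mul_polyC mulrBr polyCM.
  by rewrite sub0r raddfN /= comp_polyC polyCM sub0r mulrN.
by rewrite (@detZ _ _ (a%:P)) -rmorphXn mul_polyC.
Qed.

Lemma prod_char (S : comNzRingType) d (M N : 'M[S]_d) (h : M *m N = 0) :
  char_poly M * char_poly N = 'X^d * char_poly (M + N).
Proof.
rewrite /char_poly -det_mulmx.
have -> : char_poly_mx M *m char_poly_mx N = 'X *: char_poly_mx (M + N).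
  rewrite /char_poly_mx mulmxBl !mulmxBr mul_scalar_mx mul_mx_scalar mul_scalar_mx.
  rewrite -map_mxM h map_mx0 subr0 map_mxD scalerBr scalerDr.
  by rewrite opprD addrA addrAC.
by rewrite (@detZ _ _ (polyX S)).
Qed.
Lemma coef_char_scale (R : comNzRingType) d (A : 'M[R]_d) k : (k <= d)%N ->
  (char_poly ((polyX R) *: map_mx polyC A))`_k = 'X^(d - k) * ((char_poly A)`_k)%:P.
Proof.
move=> hk.
have := congr1 (fun p : {poly {poly R}} => p`_k) (char_poly_scale (polyX R) (map_mx polyC A)).
rewrite /= coef_comp_scale coefZ -map_char_poly coef_map /=.
have e : (polyX R)^+d = (polyX R)^+k * (polyX R)^+(d-k) by rewrite -exprD subnKC.
rewrite e -mulrA.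
by apply: (monic_lreg (monicXn _ _)).
Qed.

Theorem lemma4p12 (R : comNzRingType) (d : nat) (A B : 'M[R]_d)
  (hAB : A *m B = 0) (i j : nat) (hi : (1 <= i <= d)%N) (hj : (1 <= j <= d)%N)
  (hij : (d < i + j)%N) :
  charcoef A i * charcoef B j = 0.
Proof.
rewrite /charcoef.
have h1 : ((polyX R) *: map_mx polyC A) *m map_mx polyC B = 0.
  by rewrite -scalemxAl -map_mxM hAB map_mx0 scaler0.
have hm : ((d - i) + (d - j) < d)%N by lia.
have E2 : \sum_(l < ((d - i) + (d - j)).+1)
   (char_poly ((polyX R) *: map_mx polyC A))`_l * (char_poly (map_mx (@polyC R) B))`_((d - i) + (d - j) - l) = 0.
  by rewrite -coefM (prod_char h1) coefXnM hm.
have E3 : \sum_(l < ((d - i) + (d - j)).+1)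
   'X^(d - l) * ((char_poly A)`_l * (char_poly B)`_((d - i) + (d - j) - l))%:P = 0.
  rewrite -[RHS]E2; apply: eq_bigr => l _.
  have hl := ltn_ord l.
  rewrite coef_char_scale; last by lia.
  by rewrite -map_char_poly coef_map /= polyCM mulrA.
have E4 := congr1 (fun p : {poly R} => p`_i) E3.
move: E4; rewrite /= coef0 coef_sum.
have hl0 : (d - i < ((d - i) + (d - j)).+1)%N by lia.
rewrite (bigD1 (Ordinal hl0)) //= coefXnM.
have -> : (i < d - (d - i))%N = false by lia.
have -> : (i - (d - (d - i)) = 0)%N by lia.
have -> : ((d - i) + (d - j) - (d - i) = d - j)%N by lia.
rewrite coefC eqxx big1 ?addr0 // => l hl.
rewrite coefXnM coefC.
have hl2 := ltn_ord l.
have hne : nat_of_ord l != (d - i)%N.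
  by apply: contra hl => /eqP e; apply/eqP/val_inj.
case: ifP => // hc.
have -> : (i - (d - l) == 0)%N = false by lia.
by [].
Qed.
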